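(* Let $x_0\in X$ be a regular point. For every $p$-harmonic function $u\ge0$ on $\mathcal T(x_0)$ there exists a unique additive function $\nu$ on $\mathcal T(x_0)$ such that $$u(x)=\frac{1}{W^{(n(x))}(x)}\,\nu(x),\qquad x\in\mathcal T(x_0).$$ Conversely, if $\nu$ is an additive function on $\mathcal T(x_0)$ and $u$ is defined by this formula, then $u$ is $p$-harmonic.
   Context: $X$ is a compact metric space, $r:X\to X$ a finite-to-one, onto, Borel map, $m_0$ a Borel function with $\frac{1}{\#r^{-1}(x)}\sum_{r(y)=x}|m_0(y)|^2=1$, and $W(x)=|m_0(x)|^2/\#r^{-1}(r(x))$. A point $x_0$ is regular if the sets $r^{-n}(x_0)$, $n\in\mathbb N$, are mutually disjoint and no $r^{-n}(x_0)$, $n\ge0$, meets the zero set of $W$. $\mathcal T(x_0)=\bigcup_{n\ge0}r^{-n}(x_0)$; $n(x)$ is the unique $n\ge0$ with $r^n(x)=x_0$. $W^{(n)}(x)=W(x)W(r(x))\cdots W(r^{n-1}(x))$ (equal to $1$ for $n=0$). A function $u$ on $\mathcal T(x_0)$ is $p$-harmonic if $u(x)=\sum_{r(y)=x}W(y)u(y)$ for all $x\in\mathcal T(x_0)$. A non-negative function $\nu$ on $\mathcal T(x_0)$ is additive if $\nu(x)=\sum_{r(y)=x}\nu(y)$ for all $x\in\mathcal T(x_0)$. *)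

(* Defs.v *)
From HB Require Import structures.
From mathcomp Require Import all_boot all_order all_algebra finmap.
From mathcomp Require Import all_classical all_reals all_analysis.
From mathcomp Require Import complex.
Set Implicit Arguments.
Unset Strict Implicit.
Unset Printing Implicit Defensive.
Import Order.TTheory GRing.Theory Num.Theory numFieldTopology.Exports.
Local Open Scope classical_set_scope.
Local Open Scope ring_scope.

Definition borel_fun (T U : topologicalType) (f : T -> U) : Prop :=
  forall B : set U, <<s open >> B -> <<s open >> (f @^-1` B).

Section Defs.
Variables (R : realType) (X : choiceType).

Definition fib (r : X -> X) (x : X) : set X := r @^-1` [set x].

Definition nfib (r : X -> X) (x : X) : R := (#|` fset_set (fib r x) |)%:R.

Definition sqmod (z : R[i]) : R := (complex.Re z) ^+ 2 + (complex.Im z) ^+ 2.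

Definition W (r : X -> X) (m0 : X -> R[i]) (x : X) : R :=
  sqmod (m0 x) / nfib r (r x).

Definition Wn (r : X -> X) (m0 : X -> R[i]) (n : nat) (x : X) : R :=
  \prod_(k < n) W r m0 (iter k r x).

Definition preim_n (r : X -> X) (n : nat) (x0 : X) : set X :=
  [set x | iter n r x = x0].

Definition regular (r : X -> X) (m0 : X -> R[i]) (x0 : X) : Prop :=
  (forall n m : nat, n <> m -> preim_n r n x0 `&` preim_n r m x0 = set0) /\
  (forall n : nat, preim_n r n x0 `&` [set x | W r m0 x = 0] = set0).

Definition tree (r : X -> X) (x0 : X) : set X :=
  \bigcup_(n in [set: nat]) preim_n r n x0.

(* n(x): the (unique, for regular x0) n >= 0 with r^n(x) = x0 *)
Definition level (r : X -> X) (x0 : X) (x : X) : nat :=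
  xget 0%N [set n : nat | iter n r x = x0].

Definition p_harmonic (r : X -> X) (m0 : X -> R[i]) (x0 : X) (u : X -> R) :
  Prop :=
  forall x, tree r x0 x -> u x = \sum_(y \in fib r x) W r m0 y * u y.

Definition additive_on (r : X -> X) (x0 : X) (nu : X -> R) : Prop :=
  (forall x, tree r x0 x -> 0 <= nu x) /\
  (forall x, tree r x0 x -> nu x = \sum_(y \in fib r x) nu y).

End Defs.

(* Main.v *)
Require Import Defs.
From HB Require Import structures.
From mathcomp Require Import all_boot all_order all_algebra finmap.
From mathcomp Require Import all_classical all_reals all_analysis.
From mathcomp Require Import complex.
Import Order.TTheory GRing.Theory Num.Theory numFieldTopology.Exports.
Local Open Scope classical_set_scope.
Local Open Scope ring_scope.


Section H.
Variables (R : realType) (X : choiceType) (r : X -> X) (m0 : X -> R[i]) (x0 : X).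
Hypothesis reg : regular r m0 x0.

Lemma level_eq x n : iter n r x = x0 -> level r x0 x = n.
Proof.
move=> h; rewrite /level; apply: xget_unique => // m hm.
case: (eqVneq m n) => [//|/eqP nm].
have := (reg.1 m n nm); rewrite -subset0 => /(_ x) H; by case: H.
Qed.

Lemma tree_level x : tree r x0 x -> iter (level r x0 x) r x = x0.
Proof. by case=> n _ h; rewrite (@level_eq x n h). Qed.

Lemma tree_fib x y : tree r x0 x -> r y = x ->
  tree r x0 y /\ level r x0 y = (level r x0 x).+1.
Proof.
move=> tx ryx; have h : iter (level r x0 x).+1 r y = x0.
  by rewrite iterSr ryx tree_level.
by split; [exists (level r x0 x).+1 | exact: level_eq].
Qed.

Lemma W_ge0 x : 0 <= W r m0 x.
Proof.
rewrite /W /nfib /sqmod; apply: divr_ge0; last exact: ler0n.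
by apply: addr_ge0; apply: sqr_ge0.
Qed.

Lemma Wn_ge0 n x : 0 <= Wn r m0 n x.
Proof. by apply: prodr_ge0 => k _; apply: W_ge0. Qed.

Lemma WnS n y : Wn r m0 n.+1 y = W r m0 y * Wn r m0 n (r y).
Proof.
rewrite /Wn big_ord_recl /=; congr (_ * _).
by apply: eq_bigr => k _ /=; rewrite add0n -iterSr.
Qed.

Lemma W_neq0 x : tree r x0 x -> W r m0 x != 0.
Proof.
case=> n _ h; apply/eqP => w0.
have := reg.2 n; rewrite -subset0 => /(_ x) H; by case: H.
Qed.

Lemma Wn_neq0_aux n x : tree r x0 x -> iter n r x = x0 -> Wn r m0 n x != 0.
Proof.
elim: n x => [|n IH] x tx h; first by rewrite /Wn big_ord0 oner_neq0.
rewrite WnS mulf_neq0 //; first exact: W_neq0.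
apply: IH; last by rewrite -iterSr.
by exists n => //; rewrite /preim_n /= -iterSr.
Qed.

Lemma Wn_neq0 x : tree r x0 x -> Wn r m0 (level r x0 x) x != 0.
Proof. by move=> tx; apply: Wn_neq0_aux => //; apply: tree_level. Qed.

End H.

Lemma aux_field (F : fieldType) (a b c : F) : a != 0 -> a * ((a * b)^-1 * c) = b^-1 * c.
Proof. by move=> a0; rewrite invfM mulrA mulrA mulfV // mul1r. Qed.

Theorem corollary4p7 (R : realType) (X : metricType R)
  (r : X -> X) (m0 : X -> R[i]) (x0 : X) :
  compact [set: X] ->
  (forall x : X, finite_set (fib r x)) ->
  (forall x : X, exists y : X, r y = x) ->
  borel_fun r ->
  @borel_fun X R^o (fun x => complex.Re (m0 x)) ->
  @borel_fun X R^o (fun x => complex.Im (m0 x)) ->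
  (forall x : X,
     (nfib R r x)^-1 * (\sum_(y \in fib r x) sqmod (m0 y)) = 1) ->
  regular r m0 x0 ->
  (forall u : X -> R,
     (forall x, tree r x0 x -> 0 <= u x) ->
     p_harmonic r m0 x0 u ->
     exists nu : X -> R,
       [/\ additive_on r x0 nu,
           (forall x, tree r x0 x ->
              u x = (Wn r m0 (level r x0 x) x)^-1 * nu x) &
           (forall nu' : X -> R, additive_on r x0 nu' ->
              (forall x, tree r x0 x ->
                 u x = (Wn r m0 (level r x0 x) x)^-1 * nu' x) ->
              forall x, tree r x0 x -> nu' x = nu x)]) /\
  (forall nu u : X -> R,
     additive_on r x0 nu ->
     (forall x, tree r x0 x ->
        u x = (Wn r m0 (level r x0 x) x)^-1 * nu x) ->
     p_harmonic r m0 x0 u).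
Proof.
move=> _ fin _ _ _ _ _ reg.
have key : forall x y, tree r x0 x -> y \in fib r x ->
    tree r x0 y /\ Wn r m0 (level r x0 y) y = W r m0 y * Wn r m0 (level r x0 x) x.
  move=> x y tx; rewrite inE => ryx.
  have [ty ly] := @tree_fib _ _ _ m0 _ reg _ _ tx ryx.
  by split => //; rewrite ly WnS ryx.
split.
- move=> u u0 hu; exists (fun x => Wn r m0 (level r x0 x) x * u x); split.
  + split=> x tx; first by apply: mulr_ge0; [apply: Wn_ge0 | apply: u0].
    rewrite (hu x tx) (@fsbig_distrr _ _ *%R +%R) //.
    apply: eq_fsbigr => y yf; have [ty ->] := key x y tx yf.
    by rewrite /= mulrCA mulrA.
  + move=> x tx /=; have nz := @Wn_neq0 _ _ _ _ _ reg x tx; by symmetry; exact: (mulKf nz (u x)).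
  + move=> nu' _ h x tx; have nz := @Wn_neq0 _ _ _ _ _ reg x tx; rewrite /= (h x tx); by symmetry; exact: (mulVKf nz (nu' x)).
- move=> nu u [_ nuS] hu x tx.
  rewrite (hu x tx) (nuS x tx) (@fsbig_distrr _ _ *%R +%R) //.
  apply: eq_fsbigr => y yf; have [ty e] := key x y tx yf.
  rewrite (hu y ty) e; symmetry; apply: aux_field.
  exact: (@W_neq0 _ _ _ _ _ reg _ ty).
Qed.
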